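(* Let $W=(w_{ij})\in\mathbb{R}^{n\times n}$ be a symmetric positive definite matrix, and define $\widetilde w_{ij}=w_{ij}+w_{ii}+w_{jj}$ for $i\ne j$. For $S\subseteq[n]$ let $$w(S)=\sum_{\{i,j\}\subseteq S,\ i\neq j} w_{ij}+\sum_{i\in S}w_{ii},\qquad \widetilde w(S)=\sum_{\{i,j\}\subseteq S,\ i\ne j}\widetilde w_{ij},$$ where the sums over $\{i,j\}$ range over unordered pairs of distinct elements. Then for every nonempty $S\subseteq[n]$, $$\frac{\widetilde w(S)}{w(S)}\le (|S|-1)\frac{\lambda_{\max}(W)}{\lambda_{\min}(W)},$$ where $\lambda_{\min}(W),\lambda_{\max}(W)$ are the minimum and maximum eigenvalues of $W$. *)

(* Defs.v *)
From HB Require Import structures.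
From mathcomp Require Import all_boot all_order all_algebra.
Set Implicit Arguments. Unset Strict Implicit. Unset Printing Implicit Defensive.
Import Order.TTheory GRing.Theory Num.Theory.
Local Open Scope ring_scope.

Definition sym_posdef (R : rcfType) (n : nat) (W : 'M[R]_n) : Prop :=
  W^T = W /\ forall x : 'rV[R]_n, x != 0 -> 0 < (x *m W *m x^T) 0 0.

Definition wS (R : rcfType) (n : nat) (W : 'M[R]_n) (S : {set 'I_n}) : R :=
  \sum_(i in S) \sum_(j in S | (i < j)%N) W i j + \sum_(i in S) W i i.

Definition wtS (R : rcfType) (n : nat) (W : 'M[R]_n) (S : {set 'I_n}) : R :=
  \sum_(i in S) \sum_(j in S | (i < j)%N) (W i j + W i i + W j j).

Definition is_min_eigenvalue (R : rcfType) (n : nat) (W : 'M[R]_n) (a : R) :=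
  eigenvalue W a /\ forall b, eigenvalue W b -> a <= b.
Definition is_max_eigenvalue (R : rcfType) (n : nat) (W : 'M[R]_n) (a : R) :=
  eigenvalue W a /\ forall b, eigenvalue W b -> b <= a.

(* Main.v *)
Require Import Defs.
From HB Require Import structures.
From mathcomp Require Import all_boot all_order all_algebra.
From mathcomp Require Import complex.
From mathcomp.algebra_tactics Require Import ring lra.
Import Order.TTheory GRing.Theory Num.Theory.
Local Open Scope ring_scope.
Lemma split_sym (R : comRingType) n (S : {set 'I_n}) (G : 'I_n -> 'I_n -> R) :
  (forall i j, G i j = G j i) ->
  \sum_(i in S) \sum_(j in S) G i j =
  (\sum_(i in S) \sum_(j in S | (i < j)%N) G i j) *+ 2 + \sum_(i in S) G i i.
Proof.
move=> Gs.
have e : forall i, i \in S -> \sum_(j in S) G i j =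
   \sum_(j in S | (i < j)%N) G i j + \sum_(j in S | (j < i)%N) G i j + G i i.
  move=> i iS; rewrite (bigID (fun j : 'I_n => (i < j)%N)) /= -addrA; congr (_ + _).
  rewrite (bigD1 i) /=; last by rewrite iS ltnn.
  rewrite addrC; congr (_ + _); apply: eq_bigl => j.
  rewrite -!andbA; congr (_ && _).
  have -> : (j != i) = (val j != val i) by [].
  by case: ltngtP.
rewrite (eq_bigr _ e) !big_split /= mulr2n -!addrA; congr (_ + _); congr (_ + _).
rewrite (exchange_big_dep (fun j => j \in S)) /=; last by move=> i j _ /andP[].
apply: eq_bigr => i iS; apply: eq_big => j; last by move=> _; rewrite Gs.
by rewrite iS.
Qed.

Lemma pair_diag (R : comRingType) n (S : {set 'I_n}) (a : 'I_n -> R) :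
  (\sum_(i in S) \sum_(j in S | (i < j)%N) (a i + a j)) *+ 2 + (\sum_(i in S) a i) *+ 2
  = ((\sum_(i in S) a i) *+ 2) * #|S|%:R.
Proof.
have h := @split_sym R n S (fun i j => a i + a j) (fun i j => addrC _ _).
have eD2 : \sum_(i in S) (a i + a i) = (\sum_(i in S) a i) *+ 2.
  by rewrite big_split mulr2n.
rewrite eD2 in h; apply: (etrans (esym h)).
have e1 : forall i, \sum_(j in S) (a i + a j) = a i *+ #|S| + \sum_(i in S) a i.
  by move=> i; rewrite big_split /= sumr_const.
rewrite (eq_bigr _ (fun i _ => e1 i)).
have e2 : \sum_(i in S) (a i *+ #|S| + \sum_(i in S) a i) = (\sum_(i in S) a i *+ #|S|) + \sum_(i in S) \sum_(i in S) a i.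
  by rewrite big_split.
rewrite e2 sumr_const sumrMnl.
by rewrite mulr2n mulrDl mulr_natr.
Qed.

Lemma pair_diag' (R : realFieldType) n (S : {set 'I_n}) (a : 'I_n -> R) :
  \sum_(i in S) \sum_(j in S | (i < j)%N) (a i + a j) = (#|S|%:R - 1) * \sum_(i in S) a i.
Proof.
have := @pair_diag _ _ S a.
move: (\sum_(i in S) \sum_(j in S | (i < j)%N) (a i + a j)) (\sum_(i in S) a i) (#|S|%:R : R) => X s K.
rewrite !mulr2n => h; lra.
Qed.

Section Ray.
Variables (R : rcfType) (n : nat) (W : 'M[R]_n).
Local Notation C := (R[i]).
Local Notation f := (real_complex R).

Lemma conjC_f (a : R) : (f a)^* = f a.
Proof. by apply: conj_Creal; apply/complex_realP; exists a. Qed.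

Lemma map_conj_f m k (A : 'M[R]_(m, k)) : map_mx Num.conj (map_mx f A) = map_mx f A.
Proof. by apply/matrixP => i j; rewrite !mxE conjC_f. Qed.

Lemma rayleigh (a b : R) : W^T = W -> (forall c, eigenvalue W c -> a <= c /\ c <= b) ->
 forall x : 'rV[R]_n, a * (x *m x^T) 0 0 <= (x *m W *m x^T) 0 0 /\
    (x *m W *m x^T) 0 0 <= b * (x *m x^T) 0 0.
Proof.
move=> WT hab x.
set Wc := map_mx f W.
have herm : Wc \is hermsymmx.
  apply/is_hermitianmxP; rewrite expr0 scale1r /Wc.
  rewrite map_trmx map_conj_f WT; done.
have /orthomx_spectralP Weq := hermitian_normalmx herm.
move: Weq.
set P := spectralmx Wc; set d := spectral_diag Wc => Weq.
have Pu : P \is unitarymx := spectral_unitarymx Wc.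
have Punit : P \in unitmx := spectral_unit Wc.
have dreal := hermitian_spectral_diag_real herm.
have hd : forall j, f a <= d 0 j /\ d 0 j <= f b.
  move=> j; have /complex_realP [c dc] : d 0 j \is Num.real by apply: (mxOverP dreal).
  have : eigenvalue W c.
    rewrite eigenvalue_root_char -(fmorph_root f) map_char_poly -eigenvalue_root_char -/Wc.
    suff : eigenvalue Wc (d 0 j) by rewrite dc.
    apply/eigenvalueP; exists (row j P).
      rewrite [in LHS]Weq !mulmxA -!row_mul mulmxV // mul1mx.
      by rewrite (mul_diag_mx d P); apply/rowP => k; rewrite !mxE.
    apply/eqP => h; have := congr1 (fun M => (M *m invmx P) 0 j) h.
    by rewrite /= -row_mul mulmxV // mul0mx !mxE eqxx /= => /eqP; rewrite oner_eq0.
  by move=> /hab [h1 h2]; rewrite dc !lecR.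
pose xc := map_mx f x.
have e1 : f ((x *m W *m x^T) 0 0) = (xc *m Wc *m map_mx Num.conj xc^T) 0 0.
  by rewrite map_trmx map_conj_f -!map_mxM [RHS]mxE.
have e2 : f ((x *m x^T) 0 0) = (xc *m map_mx Num.conj xc^T) 0 0.
  by rewrite map_trmx map_conj_f -!map_mxM [RHS]mxE.
pose y := xc *m map_mx Num.conj P^T.
have Py : P *m map_mx Num.conj xc^T = map_mx Num.conj y^T.
  by rewrite /y trmx_mul map_mxM trmxCK.
have e3 : xc *m Wc *m map_mx Num.conj xc^T = y *m diag_mx d *m map_mx Num.conj y^T.
  by rewrite [in LHS]Weq invmx_unitary // -Py !mulmxA.
have e4 : xc *m map_mx Num.conj xc^T = y *m map_mx Num.conj y^T.
  by rewrite -Py /y !mulmxA -(mulmxA xc) -invmx_unitary // mulVmx // mulmx1.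
have s3 : (y *m diag_mx d *m map_mx Num.conj y^T) 0 0 = \sum_j d 0 j * (y 0 j * (y 0 j)^*).
  rewrite mul_mx_diag mxE; apply: eq_bigr => k _; by rewrite !mxE mulrA [_ * d 0 k]mulrC.
have s4 : (y *m map_mx Num.conj y^T) 0 0 = \sum_j (y 0 j * (y 0 j)^*).
  rewrite mxE; apply: eq_bigr => k _; by rewrite !mxE.
split; rewrite -lecR rmorphM /= e1 e2 e3 e4 s3 s4.
  rewrite mulr_sumr; apply: ler_sum => j _; apply: ler_wpM2r; first exact: mul_conjC_ge0.
  by case: (hd j).
rewrite mulr_sumr; apply: ler_sum => j _; apply: ler_wpM2r; first exact: mul_conjC_ge0.
by case: (hd j).
Qed.
End Ray.

Theorem lemma6 (R : rcfType) (n : nat) (W : 'M[R]_n) (lmin lmax : R)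
  (S : {set 'I_n}) :
  sym_posdef W ->
  is_min_eigenvalue W lmin -> is_max_eigenvalue W lmax ->
  S != set0 ->
  wtS W S / wS W S <= (#|S| - 1)%:R * (lmax / lmin).
Proof.
move=> [WT pd] [emin hmin] [emax hmax] Sne.
have hab : forall c, eigenvalue W c -> lmin <= c /\ c <= lmax.
  by move=> c h; split; [apply: hmin | apply: hmax].
have ray := @rayleigh _ _ W _ _ WT hab.
have lle : lmin <= lmax := hmax _ emin.
have lmin_pos : 0 < lmin.
  move/eigenvalueP: emin => [v vW vnz].
  have := pd v vnz; rewrite vW -scalemxAl mxE => h.
  have vv0 : 0 <= (v *m v^T) 0 0.
    by rewrite mxE; apply: sumr_ge0 => j _; rewrite mxE -expr2 sqr_ge0.
  rewrite le_eqVlt in vv0; case/orP: vv0 => [/eqP vv| vpos].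
    by rewrite -vv mulr0 ltxx in h.
  by rewrite pmulr_lgt0 in h.
have Wii : forall i, lmin <= W i i /\ W i i <= lmax.
  move=> i; have [h1 h2] := ray (delta_mx 0 i : 'rV[R]_n).
  have e1 : ((delta_mx 0 i : 'rV[R]_n) *m W *m (delta_mx 0 i : 'rV[R]_n)^T) 0 0 = W i i.
    by rewrite -rowE trmx_delta -colE !mxE.
  have e2 : ((delta_mx 0 i : 'rV[R]_n) *m (delta_mx 0 i : 'rV[R]_n)^T) 0 0 = 1.
    by rewrite trmx_delta mul_delta_mx mxE eqxx.
  by rewrite e1 e2 !mulr1 in h1 h2.
pose k := #|S|.
pose x : 'rV[R]_n := \row_i ((i \in S)%:R).
have xx : (x *m x^T) 0 0 = k%:R.
  rewrite mxE; transitivity (\sum_(j in S) (1:R)); last by rewrite sumr_const.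
  rewrite [RHS]big_mkcond; apply: eq_bigr => j _; rewrite !mxE.
  by case: (j \in S); rewrite /= ?mulr1n ?mulr0n ?mulr1 ?mulr0.
pose Q := \sum_(i in S) \sum_(j in S) W i j.
have xWx : (x *m W *m x^T) 0 0 = Q.
  rewrite mxE.
  transitivity (\sum_j \sum_i ((i \in S)%:R * W i j * (j \in S)%:R)).
    apply: eq_bigr => j _; rewrite !mxE big_distrl /=; apply: eq_bigr => i _.
    by rewrite !mxE.
  rewrite exchange_big /= [RHS]big_mkcond; apply: eq_bigr => i _.
  case: (i \in S); rewrite /=; last by rewrite big1 // => j _; rewrite mulr0n mul0r mul0r.
  rewrite [RHS]big_mkcond; apply: eq_bigr => j _.
  by case: (j \in S); rewrite /= ?mulr1n ?mulr0n ?mulr1 ?mulr0 ?mul1r.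
pose Pr := \sum_(i in S) \sum_(j in S | (i < j)%N) W i j.
pose D := \sum_(i in S) W i i.
pose T := \sum_(i in S) \sum_(j in S | (i < j)%N) (W i i + W j j).
have WS : forall i j, W i j = W j i.
  by move=> i j; rewrite -[in RHS]WT mxE.
have eQ : Q = Pr + Pr + D by rewrite /Q (@split_sym _ _ S) // mulr2n.
have eT' : T = (k%:R - 1) * D by rewrite /T (@pair_diag' _ _ S (fun i => W i i)).
have ewt : wtS W S = Pr + T.
  by rewrite /wtS /Pr /T -big_split /=; apply: eq_bigr => i _; rewrite -big_split /=;
    apply: eq_bigr => j _; rewrite addrA.
have ews : wS W S = Pr + D by [].
have Dlo : k%:R * lmin <= D.
  apply: (@le_trans _ _ (\sum_(i in S) lmin)); last by apply: ler_sum => i _; case: (Wii i).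
  by rewrite sumr_const mulr_natl.
have Dhi : D <= k%:R * lmax.
  apply: (@le_trans _ _ (\sum_(i in S) lmax)); first by apply: ler_sum => i _; case: (Wii i).
  by rewrite sumr_const mulr_natl.
have Qlo : k%:R * lmin <= Q.
  by have [h _] := ray x; rewrite xx xWx mulrC in h.
have k1 : (0 < k)%N by rewrite card_gt0.
rewrite ewt ews natrB // -/k.
have kpos : 0 < k%:R * lmin by rewrite mulr_gt0 // ltr0n.
have Dpos : 0 < D by lra.
have wpos : 0 < Pr + D by lra.
rewrite ler_pdivrMr // -(ler_pM2r lmin_pos).
have hr : (k%:R - 1) * (lmax / lmin) * (Pr + D) * lmin = (k%:R - 1) * lmax * (Pr + D).
  by field; rewrite gt_eqF.
rewrite hr eT'.
case: (ltnP 1 k) => [k2|k1'].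
  have K1 : 2%:R <= k%:R :> R by rewrite ler_nat.
  have lmaxpos : 0 < lmax by apply: lt_le_trans lle.
  have h1 : 0 <= (k%:R - 1) * D * (lmax - lmin).
    by rewrite !mulr_ge0 // ?subr_ge0 // ?ltW //; lra.
  have h2 : 0 <= (lmax - lmin) * Q by rewrite mulr_ge0 ?subr_ge0 //; lra.
  have h4 : lmax * (k%:R * lmin) <= lmax * Q by rewrite ler_wpM2l // ltW.
  have h5 : lmin * D <= lmin * (k%:R * lmax) by rewrite ler_wpM2l // ltW.
  have h3' : 0 <= lmax * Q - lmin * D by lra.
  have h3 : 0 <= (k%:R - 2%:R) * (lmax * Q - lmin * D) by rewrite mulr_ge0 //; lra.
  rewrite eQ in h2 h3.
  lra.
have k_eq1 : k = 1%N by apply/anti_leq; rewrite k1' k1.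
have Pr0 : Pr = 0.
  have /cards1P [i0 Si0] : #|S| == 1%N by rewrite -/k k_eq1.
  by rewrite /Pr Si0 big_set1 big1 // => j /andP [/set1P -> ]; rewrite ltnn.
rewrite Pr0 k_eq1 subrr; lra.
Qed.
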